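(* Let $N,T,U$ be integers with $0\le T<U\le N$, let $\mathbb{F}_q$ be a finite field, let $d$ be divisible by $U-T$, and let $W\in\mathbb{F}_q^{U\times N}$ be a $T$-private MDS matrix with columns $W_1,\dots,W_N$. For each $i\in[N]$, let $\mathbf{z}_i$ be uniformly random in $\mathbb{F}_q^d$, partitioned into $[\mathbf{z}_i]_1,\dots,[\mathbf{z}_i]_{U-T}\in\mathbb{F}_q^{d/(U-T)}$, let $[\mathbf{n}_i]_{U-T+1},\dots,[\mathbf{n}_i]_U\in\mathbb{F}_q^{d/(U-T)}$ be random, and set $[\tilde{\mathbf{z}}_i]_j=([\mathbf{z}_i]_1,\dots,[\mathbf{z}_i]_{U-T},[\mathbf{n}_i]_{U-T+1},\dots,[\mathbf{n}_i]_U)\cdot W_j$ for $j\in[N]$, where all $\mathbf{z}_i$'s and $[\mathbf{n}_i]_k$'s are mutually independent across users. Then for any $\mathcal{T}\subseteq[N]$ of size $T$ and any $\mathcal{U}_1\subseteq[N]$ with $|\mathcal{U}_1|\ge U$, if the random masks $[\mathbf{n}_i]_k$'s are jointly uniformly random, we have $$I\big(\{\mathbf{z}_i\}_{i\in[N]\setminus\mathcal{T}};\ \{\mathbf{z}_i\}_{i\in\mathcal{T}},\{[\tilde{\mathbf{z}}_j]_i\}_{j\in[N],\,i\in\mathcal{T}}\big)=0.$$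
   Context: A matrix $W\in\mathbb{F}_q^{U\times N}$ is MDS if every $U\times U$ submatrix of $W$ is invertible; it is $T$-private MDS if, in addition, the $T\times N$ submatrix formed by its rows $U-T+1,\dots,U$ is MDS (every $T\times T$ submatrix of it is invertible). The product of the row of vectors with the column $W_j$ means the linear combination $\sum_{k=1}^U W_{k,j}\,v_k$ of the $U$ vectors $v_k\in\mathbb{F}_q^{d/(U-T)}$. $I(\cdot;\cdot)$ denotes mutual information. *)

(* Defs.v *)
From HB Require Import structures.
From mathcomp Require Import all_boot all_order all_algebra all_field.
From mathcomp Require Import reals exp.
Set Implicit Arguments. Unset Strict Implicit. Unset Printing Implicit Defensive.
Import Order.TTheory GRing.Theory Num.Theory.
Local Open Scope ring_scope.

Definition is_MDS (F : fieldType) (a b : nat) (W : 'M[F]_(a, b)) : Prop :=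
  forall f : 'I_a -> 'I_b, injective f -> colsub f W \in unitmx.

(* W (U x N) is T-private MDS: W is MDS and the T x N submatrix formed by its
   last T rows (rows U-T+1..U, i.e. 0-based indices U-T .. U-1) is MDS. *)
Definition is_private_MDS (F : fieldType) (U N T : nat) (W : 'M[F]_(U, N)) : Prop :=
  is_MDS W /\
  forall s : 'I_T -> 'I_U, (forall i : 'I_T, val (s i) = (U - T + i)%N) ->
    is_MDS (rowsub s W).

Definition block (F : fieldType) (d m : nat) (z : 'rV[F]_d) (k : nat) : 'rV[F]_m :=
  \row_(l < m) nth 0 [seq z 0 i | i <- enum 'I_d] (k * m + l).

(* the k-th (0-based, k < U) vector of the row
   ([z]_1, ..., [z]_{U-T}, [n]_{U-T+1}, ..., [n]_U) *)
Definition share_vec (F : fieldType) (U T d m : nat) (z : 'rV[F]_d)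
    (n : T.-tuple 'rV[F]_m) (k : 'I_U) : 'rV[F]_m :=
  if (k < U - T)%N then block m z k else nth 0 n (k - (U - T)).

Definition share (F : fieldType) (U N T d m : nat) (W : 'M[F]_(U, N))
    (z : 'rV[F]_d) (n : T.-tuple 'rV[F]_m) (j : 'I_N) : 'rV[F]_m :=
  \sum_(k < U) W k j *: share_vec z n k.

Definition prob (R : realType) (Omega : finType) (P : {ffun Omega -> R})
    (E : pred Omega) : R := \sum_(w | E w) P w.

Definition uniform_pmf (R : realType) (Omega : finType) : {ffun Omega -> R} :=
  [ffun _ => (#|Omega|%:R)^-1].

Definition mutual_info (R : realType) (Omega A B : finType)
    (P : {ffun Omega -> R}) (X : Omega -> A) (Y : Omega -> B) : R :=
  \sum_(a : A) \sum_(b : B)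
    let pab := prob P (fun w => (X w == a) && (Y w == b)) in
    if pab == 0 then 0
    else pab * ln (pab / (prob P (fun w => X w == a) * prob P (fun w => Y w == b))).

(* Main.v *)
Require Import Defs.
From HB Require Import structures.
From mathcomp Require Import all_boot all_order all_algebra all_field.
From mathcomp Require Import reals exp.
From Stdlib Require Import Lia.
From mathcomp Require Import zify.
Import Order.TTheory GRing.Theory Num.Theory.
Local Open Scope ring_scope.
Lemma mi0 (R : realType) (Omega A B : finType) (X : Omega -> A) (Y : Omega -> B) :
  (0 < #|Omega|)%N ->
  (forall a a' b, prob (uniform_pmf R Omega) (fun w => (X w == a) && (Y w == b)) =
                  prob (uniform_pmf R Omega) (fun w => (X w == a') && (Y w == b))) ->
  mutual_info (uniform_pmf R Omega) X Y = 0.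
Proof.
move=> hO H.
set P := uniform_pmf R Omega.
have tot : \sum_w P w = 1.
  under eq_bigr do rewrite ffunE.
  rewrite sumr_const -[_ *+ _]mulr_natr mulVf // pnatr_eq0 -lt0n //.
have pa : forall a, prob P (fun w => X w == a) = \sum_b prob P (fun w => (X w == a) && (Y w == b)).
  by move=> a; rewrite /prob (partition_big Y predT).
have pb : forall a b, prob P (fun w => Y w == b) = #|A|%:R * prob P (fun w => (X w == a) && (Y w == b)).
  move=> a b; rewrite /prob (partition_big X predT) //=.
  rewrite mulr_natl -[_ *+ _]sumr_const; apply: eq_bigr => a' _.
  transitivity (prob P (fun w => (X w == a') && (Y w == b))); last exact: H.
  by apply: eq_bigl => w; rewrite andbC.
have pa1 : forall a, #|A|%:R * prob P (fun w => X w == a) = 1.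
  move=> a; transitivity (\sum_w P w); last exact: tot.
  rewrite [RHS](partition_big X predT) //= mulr_natl -[_ *+ _]sumr_const.
  apply: eq_bigr => a' _; rewrite -/(prob P (fun w => X w == a')) !pa.
  by apply: eq_bigr => b _; apply: H.
rewrite /mutual_info; apply: big1 => a _; apply: big1 => b _ /=.
case: ifP => // /negbT nz.
by rewrite (pb a b) mulrA [_ * #|A|%:R]mulrC pa1 mul1r divff // ln1 mulr0.
Qed.

Lemma share_diff (F : fieldType) (U N T d m : nat) (W : 'M[F]_(U,N)) (z : 'rV[F]_d)
  (n n' : T.-tuple 'rV[F]_m) (j : 'I_N) (s : 'I_T -> 'I_U)
  (hs : forall t, val (s t) = (U - T + t)%N) (hTU : (T <= U)%N) :
  share W z n j - share W z n' j = \sum_(t < T) W (s t) j *: (nth 0 n t - nth 0 n' t).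
Proof.
have sinj : injective s by move=> t1 t2 /(congr1 val); rewrite !hs => /addnI /val_inj.
rewrite /share -sumrB.
under eq_bigr do rewrite -scalerBr.
rewrite (bigID (fun k : 'I_U => k \in codom s)) /= [X in _ + X]big1 ?addr0; last first.
  move=> k /negP kn; rewrite /share_vec; case: ifP => kU; first by rewrite subrr scaler0.
  exfalso; apply: kn; apply/codomP.
  have kl : (k - (U - T) < T)%N by have := ltn_ord k; lia.
  exists (Ordinal kl); apply: val_inj; rewrite hs /=; move: kU => /negbT; lia.
rewrite -big_uniq /=; last by rewrite map_inj_uniq ?enum_uniq.
rewrite big_image; apply: eq_bigr => t _.
by rewrite /share_vec hs ltnNge leq_addr /= addKn.
Qed.

Lemma Phi_inj (F : fieldType) (U N T d m : nat) (W : 'M[F]_(U,N))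
  (hW : is_private_MDS T W) (hTU : (T < U)%N) (Tset : {set 'I_N}) (hT : #|Tset| = T)
  (z : 'rV[F]_d) :
  injective (fun n : T.-tuple 'rV[F]_m => [ffun i : {i | i \in Tset} => share W z n (val i)]).
Proof.
move=> n n' /ffunP H.
have sP : forall t : 'I_T, (U - T + t < U)%N by move=> t; have := ltn_ord t; lia.
pose s (t : 'I_T) : 'I_U := Ordinal (sP t).
have hs : forall t, val (s t) = (U - T + t)%N by [].
pose f (t : 'I_T) : 'I_N := enum_val (cast_ord (esym hT) t).
have finj : injective f by move=> t1 t2 /enum_val_inj /cast_ord_inj.
have fT : forall t, f t \in Tset by move=> t; apply: enum_valP.
pose M := colsub f (rowsub s W).
have hM : M \in unitmx by apply: (hW.2 s hs f finj).
pose D : 'M[F]_(T, m) := \matrix_(t, l) (nth 0 n t - nth 0 n' t) 0 l.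
have MD : M^T *m D = 0.
  apply/matrixP => i l; rewrite !mxE.
  have := H (exist (fun k => k \in Tset) (f i) (fT i)); rewrite !ffunE /= => /eqP; rewrite -subr_eq0 => /eqP.
  rewrite (@share_diff _ _ _ _ _ _ W z n n' (f i) s hs (ltnW hTU)) => /(congr1 (fun v : 'rV[F]_m => v 0 l)).
  rewrite summxE mxE => E; rewrite -{}[RHS]E; apply: eq_bigr => t _; rewrite !mxE.
  by [].
have hMT : M^T \in unitmx by rewrite unitmx_tr.
have D0 : D = 0 by rewrite -[D](mulKmx hMT) MD mulmx0.
apply: eq_from_tnth => t; rewrite !(tnth_nth 0); apply/rowP => l.
by apply/eqP; rewrite -subr_eq0; have := congr1 (fun A : 'M[F]_(T, m) => A t l) D0; rewrite !mxE => ->.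
Qed.

Theorem lemma1 (R : realType) (F : finFieldType) (N T U d : nat)
  (hTU : (T < U)%N) (hUN : (U <= N)%N) (hd : (U - T %| d)%N)
  (W : 'M[F]_(U, N)) (hW : is_private_MDS T W)
  (Tset : {set 'I_N}) (hT : #|Tset| = T)
  (U1 : {set 'I_N}) (hU1 : (U <= #|U1|)%N) :
  let m := (d %/ (U - T))%N in
  let Omega := ({ffun 'I_N -> 'rV[F]_d} * {ffun 'I_N -> T.-tuple 'rV[F]_m})%type in
  let X := fun w : Omega =>
    [ffun i : {i : 'I_N | i \notin Tset} => w.1 (val i)] in
  let Y := fun w : Omega =>
    ([ffun i : {i : 'I_N | i \in Tset} => w.1 (val i)],
     [ffun p : ('I_N * {i : 'I_N | i \in Tset})%type =>
        share W (w.1 p.1) (w.2 p.1) (val p.2)]) in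
  mutual_info (uniform_pmf R Omega) X Y = 0.
Proof.
move=> m Omega X Y.
pose n0 : T.-tuple 'rV[F]_m := [tuple 0 | _ < T].
apply: mi0.
  by apply/card_gt0P; exists ([ffun=> 0], [ffun=> n0]).
move=> a a' b.
pose Phi (z : 'rV[F]_d) (n : T.-tuple 'rV[F]_m) :=
  [ffun i : {i : 'I_N | i \in Tset} => share W z n (val i)].
have Phinj : forall z, injective (Phi z) := @Phi_inj _ _ _ _ d m W hW hTU Tset hT.
have Phisurj : forall z y, exists n, y = Phi z n.
  move=> z y; apply/codomP; apply: inj_card_onto (Phinj z) _ y.
  rewrite card_ffun card_tuple card_sig /=.
  have -> : #|[pred x in Tset]| = #|Tset| by apply: eq_card.
  by rewrite hT.
pose Psi z y := odflt n0 [pick n | Phi z n == y].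
have PhiPsi : forall z y, Phi z (Psi z y) = y.
  move=> z y; rewrite /Psi; case: pickP => [n /eqP //|H0].
  by have [n En] := Phisurj z y; move: (H0 n); rewrite En eqxx.
pose delta : {ffun 'I_N -> 'rV[F]_d} :=
  [ffun j => if insub j is Some i then a' i - a i else 0].
pose g (w : Omega) : Omega :=
  ([ffun j => w.1 j + delta j],
   [ffun j => Psi (w.1 j + delta j) (Phi (w.1 j) (w.2 j))]).
have ginj : injective g.
  move=> [z1 n1] [z2 n2] [] /ffunP E1 /ffunP E2.
  have ez : z1 = z2 by apply/ffunP => j; have := E1 j; rewrite !ffunE => /addIr.
  subst z2; congr pair; apply/ffunP => j; have := E2 j; rewrite !ffunE.
  set zz := (z1 j + _) => E; have := congr1 (Phi zz) E.
  by rewrite !PhiPsi => /Phinj.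
have gY : forall w, Y (g w) = Y w.
  move=> [z n]; rewrite /Y /=; congr pair; apply/ffunP => i; rewrite !ffunE.
    by rewrite insubN ?addr0 // negbK (valP i).
  have := congr1 (fun y : {ffun {i : 'I_N | i \in Tset} -> 'rV[F]_m} => y i.2) (PhiPsi (z i.1 + delta i.1) (Phi (z i.1) (n i.1))).
  by rewrite !ffunE.
have gX : forall w, (X (g w) == a') = (X w == a).
  move=> [z n]; apply/eqP/eqP => E; apply/ffunP => i;
    have := congr1 (fun f : {ffun {i : 'I_N | i \notin Tset} -> 'rV[F]_d} => f i) E; rewrite !ffunE /= valK.
    by move=> /(congr1 (fun v => v - (a' i - a i))); rewrite addrK => ->; rewrite opprB addrC subrK.
  by move=> ->; rewrite addrC subrK.
rewrite /prob [RHS](reindex_inj ginj); apply: eq_big => w; first by rewrite gX gY.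
by rewrite !ffunE.
Qed.
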